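(* Let $(A,[\cdot,\cdot])$ be a Malcev algebra and let $r\in A\otimes A$ be skew-symmetric. Assume there exists a nondegenerate symmetric invariant bilinear form $B$ on $A$, and define $\varphi:A\to A^*$ by $\langle\varphi(x),y\rangle=B(x,y)$. Then $r$ is a solution of the Malcev Yang-Baxter equation in $A$ if and only if $\mathcal{R}=r\circ\varphi:A\to A$ is a Rota-Baxter operator of weight $0$ on $A$.
   Context: Field $\mathbb{K}$ of characteristic zero, finite-dimensional spaces. A Malcev algebra is a vector space with an anti-symmetric bracket satisfying $J(x,y,[x,z])=[J(x,y,z),x]$, $J(x,y,z)=[[x,y],z]+[[z,x],y]+[[y,z],x]$. $r\in A\otimes A$ is viewed as a map $r:A^*\to A$ by $\langle a^*,r(b^* )\rangle=\langle a^*\otimes b^*,r\rangle$; skew-symmetric means $r=-\sigma(r)$ with $\sigma(a\otimes b)=b\otimes a$. For $r=\sum_i x_i\otimes y_i$, $r$ solves the Malcev Yang-Baxter equation if $\sum_{i,j}[x_i,x_j]\otimes y_i\otimes y_j+\sum_{i,j}x_i\otimes[y_i,x_j]\otimes y_j+\sum_{i,j}x_i\otimes x_j\otimes[y_i,y_j]=0$. A symmetric bilinear form $B$ is invariant if $B([x,y],z)=B(x,[y,z])$. A Rota-Baxter operator of weight $0$ is a linear map $\mathcal{R}:A\to A$ with $[\mathcal{R}(x),\mathcal{R}(y)]=\mathcal{R}([\mathcal{R}(x),y]+[x,\mathcal{R}(y)])$ for all $x,y$. *)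

(* Defs.v *)
(* A finite-dimensional K-vector space A is coordinatized as
   'rV[K]_n (row vectors), with standard basis e_i = delta_mx 0 i.
   Tensors in A (x) A are represented by their coefficient matrices:
   r : 'M[K]_n stands for  \sum_(a,b) r a b *: (e_a (x) e_b). *)
From HB Require Import structures.
From mathcomp Require Import all_boot all_order all_algebra.
Set Implicit Arguments. Unset Strict Implicit. Unset Printing Implicit Defensive.
Import Order.TTheory GRing.Theory Num.Theory.
Local Open Scope ring_scope.

Section Defs.
Variables (K : fieldType) (n : nat).
Notation A := 'rV[K]_n.

Definition ebas (i : 'I_n) : A := delta_mx 0 i.

Definition bilinear_br (br : A -> A -> A) : Prop :=
  (forall (a : K) x y z, br (a *: x + y) z = a *: br x z + br y z) /\
  (forall (a : K) x y z, br x (a *: y + z) = a *: br x y + br x z).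

Definition bilinear_form (B : A -> A -> K) : Prop :=
  (forall (a : K) x y z, B (a *: x + y) z = a * B x z + B y z) /\
  (forall (a : K) x y z, B x (a *: y + z) = a * B x y + B x z).

Definition jacobian (br : A -> A -> A) (x y z : A) : A :=
  br (br x y) z + br (br z x) y + br (br y z) x.

Definition malcev (br : A -> A -> A) : Prop :=
  [/\ bilinear_br br,
      (forall x y, br x y = - br y x) &
      (forall x y z, jacobian br x y (br x z) = br (jacobian br x y z) x)].

(* skew-symmetry r = - sigma(r); sigma(r) has coefficient matrix r^T *)
Definition skew_tensor (r : 'M[K]_n) : Prop := r^T = - r.

(* coordinate (p,q,s) of the pure tensor x (x) y (x) z in A (x) A (x) A *)
Definition tens3 (x y z : A) (p q s : 'I_n) : K := x 0 p * y 0 q * z 0 s.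

(* Writing r = \sum_{(a,b)} x_(a,b) (x) y_(a,b) with x_(a,b) = r a b *: e_a and
   y_(a,b) = e_b, the coordinate (p,q,s) of
   \sum [x_i,x_j](x)y_i(x)y_j + x_i(x)[y_i,x_j](x)y_j + x_i(x)x_j(x)[y_i,y_j]. *)
Definition mybe_lhs (br : A -> A -> A) (r : 'M[K]_n) (p q s : 'I_n) : K :=
  \sum_(a < n) \sum_(b < n) \sum_(c < n) \sum_(d < n)
    let xi := r a b *: ebas a in let yi := ebas b in
    let xj := r c d *: ebas c in let yj := ebas d in
    (tens3 (br xi xj) yi yj p q s + tens3 xi (br yi xj) yj p q s
     + tens3 xi xj (br yi yj) p q s).

Definition malcev_YBE (br : A -> A -> A) (r : 'M[K]_n) : Prop :=
  forall p q s, mybe_lhs br r p q s = 0.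

(* r viewed as a map A^* -> A :  <e_i^*, r(f)> = <e_i^* (x) f, r>
   = \sum_j r i j * f(e_j), for a linear functional f : A -> K *)
Definition rmap (r : 'M[K]_n) (f : A -> K) : A :=
  \sum_(i < n) (\sum_(j < n) r i j * f (ebas j)) *: ebas i.

Definition phiB (B : A -> A -> K) (x : A) : A -> K := fun y => B x y.

Definition rota_baxter0 (br : A -> A -> A) (R : A -> A) : Prop :=
  forall x y, br (R x) (R y) = R (br (R x) y + br x (R y)).

End Defs.

(* Main.v *)
Require Import Defs.
From HB Require Import structures.
From mathcomp Require Import all_boot all_order all_algebra.
From mathcomp Require Import ring.
Set Implicit Arguments. Unset Strict Implicit. Unset Printing Implicit Defensive.
Import GRing.Theory.
Local Open Scope ring_scope.

Definition rv (K : fieldType) (n : nat) (r : 'M[K]_n) (x : 'rV[K]_n) := x *m r^T.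
Definition lv (K : fieldType) (n : nat) (r : 'M[K]_n) (x : 'rV[K]_n) := x *m r.
Definition dot (K : fieldType) (n : nat) (u v : 'rV[K]_n) : K := (u *m v^T) 0 0.
Definition Fm (K : fieldType) (n : nat) (br : 'rV[K]_n -> 'rV[K]_n -> 'rV[K]_n)
  (r : 'M[K]_n) (x y z : 'rV[K]_n) : K :=
  dot x (br (rv r y) (rv r z)) + dot y (br (lv r x) (rv r z))
  + dot z (br (lv r x) (lv r y)).
Definition phi (K : fieldType) (n : nat) (B : 'rV[K]_n -> 'rV[K]_n -> K) (x : 'rV[K]_n)
  : 'rV[K]_n := \row_j B x (ebas _ j).

Lemma br0l (K : fieldType) (n : nat) (br : 'rV[K]_n -> 'rV[K]_n -> 'rV[K]_n) :
  bilinear_br br -> forall z, br 0 z = 0.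
Proof.
move=> [hl _] z; have := hl 1 0 0 z; rewrite !scale1r addr0 => h.
by apply: (@addrI _ (br 0 z)); rewrite addr0 -h.
Qed.

Lemma br0r (K : fieldType) (n : nat) (br : 'rV[K]_n -> 'rV[K]_n -> 'rV[K]_n) :
  bilinear_br br -> forall z, br z 0 = 0.
Proof.
move=> [_ hl] z; have := hl 1 z 0 0; rewrite !scale1r addr0 => h.
by apply: (@addrI _ (br z 0)); rewrite addr0 -h.
Qed.

Lemma brDl (K : fieldType) (n : nat) (br : 'rV[K]_n -> 'rV[K]_n -> 'rV[K]_n) :
  bilinear_br br -> forall z u v, br (u + v) z = br u z + br v z.
Proof. by move=> [hl _] z u v; have := hl 1 u v z; rewrite !scale1r. Qed.

Lemma brDr (K : fieldType) (n : nat) (br : 'rV[K]_n -> 'rV[K]_n -> 'rV[K]_n) :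
  bilinear_br br -> forall z u v, br z (u + v) = br z u + br z v.
Proof. by move=> [_ hl] z u v; have := hl 1 z u v; rewrite !scale1r. Qed.

Lemma brZl (K : fieldType) (n : nat) (br : 'rV[K]_n -> 'rV[K]_n -> 'rV[K]_n) :
  bilinear_br br -> forall c u z, br (c *: u) z = c *: br u z.
Proof.
move=> hb c u z; have := (proj1 hb) c u 0 z; rewrite addr0 (br0l hb) addr0 //.
Qed.

Lemma brZr (K : fieldType) (n : nat) (br : 'rV[K]_n -> 'rV[K]_n -> 'rV[K]_n) :
  bilinear_br br -> forall c u z, br z (c *: u) = c *: br z u.
Proof.
move=> hb c u z; have := (proj2 hb) c z u 0; rewrite addr0 (br0r hb) addr0 //.
Qed.

Lemma brNl (K : fieldType) (n : nat) (br : 'rV[K]_n -> 'rV[K]_n -> 'rV[K]_n) :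
  bilinear_br br -> forall u z, br (- u) z = - br u z.
Proof. by move=> hb u z; rewrite -scaleN1r (brZl hb) scaleN1r. Qed.

Lemma brNr (K : fieldType) (n : nat) (br : 'rV[K]_n -> 'rV[K]_n -> 'rV[K]_n) :
  bilinear_br br -> forall u z, br z (- u) = - br z u.
Proof. by move=> hb u z; rewrite -scaleN1r (brZr hb) scaleN1r. Qed.

Lemma brsuml (K : fieldType) (n : nat) (br : 'rV[K]_n -> 'rV[K]_n -> 'rV[K]_n) :
  bilinear_br br -> forall (f : 'I_n -> 'rV[K]_n) z,
  br (\sum_(i < n) f i) z = \sum_(i < n) br (f i) z.
Proof.
move=> hb f z.
exact: (big_morph (fun u => br u z) (brDl hb z) (br0l hb z)).
Qed.

Lemma brsumr (K : fieldType) (n : nat) (br : 'rV[K]_n -> 'rV[K]_n -> 'rV[K]_n) :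
  bilinear_br br -> forall (f : 'I_n -> 'rV[K]_n) z,
  br z (\sum_(i < n) f i) = \sum_(i < n) br z (f i).
Proof.
move=> hb f z.
exact: (big_morph (fun u => br z u) (brDr hb z) (br0r hb z)).
Qed.

Lemma lin_sum (K : fieldType) (n : nat) (f : 'rV[K]_n -> K) :
  (forall c u v, f (c *: u + v) = c * f u + f v) ->
  forall x : 'rV[K]_n, f x = \sum_(i < n) x 0 i * f (ebas _ i).
Proof.
move=> hf x.
have f0 : f 0 = 0.
  have := hf 1 0 0; rewrite scale1r addr0 mul1r => h.
  by apply: (@addrI _ (f 0)); rewrite addr0 -h.
have fD : {morph f : u v / u + v}.
  by move=> u v; rewrite -[u in LHS]scale1r hf mul1r.
rewrite {1}(row_sum_delta x) (big_morph f fD f0).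
apply: eq_bigr => i _.
by have := hf (x 0 i) (ebas _ i) 0; rewrite addr0 f0 addr0.
Qed.

Lemma ebasC (K : fieldType) (n : nat) (i j : 'I_n) :
  (ebas K i) 0 j = (ebas K j) 0 i.
Proof. by rewrite /ebas !mxE !eqxx /= eq_sym. Qed.

Lemma dot_ebas (K : fieldType) (n : nat) (p : 'I_n) (v : 'rV[K]_n) :
  dot (ebas _ p) v = v 0 p.
Proof. by rewrite /dot /ebas -rowE !mxE. Qed.

Lemma dot_sym (K : fieldType) (n : nat) (u v : 'rV[K]_n) : dot u v = dot v u.
Proof. by rewrite /dot !mxE; apply: eq_bigr => i _; rewrite !mxE mulrC. Qed.

Lemma dotL (K : fieldType) (n : nat) (c : K) (u v w : 'rV[K]_n) :
  dot (c *: u + v) w = c * dot u w + dot v w.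
Proof. by rewrite /dot mulmxDl -scalemxAl !mxE. Qed.

Lemma dotR (K : fieldType) (n : nat) (c : K) (u v w : 'rV[K]_n) :
  dot w (c *: u + v) = c * dot w u + dot w v.
Proof. by rewrite dot_sym dotL !(dot_sym w). Qed.

Lemma dotNl (K : fieldType) (n : nat) (u w : 'rV[K]_n) : dot (- u) w = - dot u w.
Proof.
have h0 : dot 0 w = 0 by rewrite /dot mul0mx mxE.
by have := dotL (-1) u 0 w; rewrite addr0 scaleN1r mulN1r h0 addr0.
Qed.

Lemma rvL (K : fieldType) (n : nat) (r : 'M[K]_n) c u v :
  rv r (c *: u + v) = c *: rv r u + rv r v.
Proof. by rewrite /rv mulmxDl scalemxAl. Qed.

Lemma lvL (K : fieldType) (n : nat) (r : 'M[K]_n) c u v :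
  lv r (c *: u + v) = c *: lv r u + lv r v.
Proof. by rewrite /lv mulmxDl scalemxAl. Qed.

Lemma FL1 (K : fieldType) (n : nat) (br : 'rV[K]_n -> 'rV[K]_n -> 'rV[K]_n) r :
  bilinear_br br -> forall c u v y z,
  Fm br r (c *: u + v) y z = c * Fm br r u y z + Fm br r v y z.
Proof.
move=> [hl hr] c u v y z.
rewrite /Fm !lvL !hl dotL !dotR; ring.
Qed.

Lemma FL2 (K : fieldType) (n : nat) (br : 'rV[K]_n -> 'rV[K]_n -> 'rV[K]_n) r :
  bilinear_br br -> forall c u v x z,
  Fm br r x (c *: u + v) z = c * Fm br r x u z + Fm br r x v z.
Proof.
move=> [hl hr] c u v x z.
rewrite /Fm rvL lvL hl hr dotL !dotR; ring.
Qed.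

Lemma FL3 (K : fieldType) (n : nat) (br : 'rV[K]_n -> 'rV[K]_n -> 'rV[K]_n) r :
  bilinear_br br -> forall c u v x y,
  Fm br r x y (c *: u + v) = c * Fm br r x y u + Fm br r x y v.
Proof.
move=> [hl hr] c u v x y.
rewrite /Fm rvL !hr dotL !dotR; ring.
Qed.

Lemma F_zero (K : fieldType) (n : nat) (br : 'rV[K]_n -> 'rV[K]_n -> 'rV[K]_n) r :
  bilinear_br br ->
  (forall p q s, Fm br r (ebas _ p) (ebas _ q) (ebas _ s) = 0) ->
  forall x y z, Fm br r x y z = 0.
Proof.
move=> hb H x y z.
have -> : Fm br r x y z = \sum_(i < n) x 0 i * Fm br r (ebas _ i) y z
  := lin_sum (f := fun u => Fm br r u y z) (fun c u v => FL1 r hb c u v y z) x.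
apply: big1 => p _.
have -> : Fm br r (ebas _ p) y z = \sum_(i < n) y 0 i * Fm br r (ebas _ p) (ebas _ i) z
  := lin_sum (f := fun u => Fm br r (ebas _ p) u z) (fun c u v => FL2 r hb c u v _ z) y.
rewrite big1 ?mulr0 // => q _.
have -> : Fm br r (ebas _ p) (ebas _ q) z
   = \sum_(i < n) z 0 i * Fm br r (ebas _ p) (ebas _ q) (ebas _ i)
  := lin_sum (f := fun u => Fm br r (ebas _ p) (ebas _ q) u) (fun c u v => FL3 r hb c u v _ _) z.
by rewrite big1 ?mulr0 // => s _; rewrite H mulr0.
Qed.

Lemma rvE (K : fieldType) (n : nat) (r : 'M[K]_n) (x : 'rV[K]_n) :
  rv r x = \sum_(a < n) \sum_(b < n) (r a b * x 0 b) *: ebas _ a.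
Proof.
rewrite [LHS]row_sum_delta; apply: eq_bigr => a _.
rewrite /ebas -scaler_suml /rv !mxE; congr (_ *: _).
by apply: eq_bigr => b _; rewrite !mxE mulrC.
Qed.

Lemma lvE (K : fieldType) (n : nat) (r : 'M[K]_n) (x : 'rV[K]_n) :
  lv r x = \sum_(a < n) \sum_(b < n) (x 0 a * r a b) *: ebas _ b.
Proof.
rewrite exchange_big /= [LHS]row_sum_delta; apply: eq_bigr => b _.
rewrite /ebas -scaler_suml /lv !mxE; congr (_ *: _).
Qed.

Lemma brsum4 (K : fieldType) (n : nat) (br : 'rV[K]_n -> 'rV[K]_n -> 'rV[K]_n) :
  bilinear_br br -> forall (X Y : 'I_n -> 'I_n -> 'rV[K]_n),
  br (\sum_(a < n) \sum_(b < n) X a b) (\sum_(c < n) \sum_(d < n) Y c d)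
  = \sum_(a < n) \sum_(b < n) \sum_(c < n) \sum_(d < n) br (X a b) (Y c d).
Proof.
move=> hb X Y.
rewrite brsuml //; apply: eq_bigr => a _; rewrite brsuml //; apply: eq_bigr => b _.
rewrite brsumr //; apply: eq_bigr => c _; rewrite brsumr //.
Qed.

Lemma sum4E (K : fieldType) (n : nat) (M : 'I_n -> 'I_n -> 'I_n -> 'I_n -> 'rV[K]_n) p :
  (\sum_(a < n) \sum_(b < n) \sum_(c < n) \sum_(d < n) M a b c d) 0 p
  = \sum_(a < n) \sum_(b < n) \sum_(c < n) \sum_(d < n) M a b c d 0 p.
Proof.
rewrite summxE; apply: eq_bigr => a _; rewrite summxE; apply: eq_bigr => b _.
rewrite summxE; apply: eq_bigr => c _; rewrite summxE //.
Qed.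

Lemma big4_split3 (K : fieldType) (n : nat) (f g h : 'I_n -> 'I_n -> 'I_n -> 'I_n -> K) :
  \sum_(a < n) \sum_(b < n) \sum_(c < n) \sum_(d < n) (f a b c d + g a b c d + h a b c d)
  = \sum_(a < n) \sum_(b < n) \sum_(c < n) \sum_(d < n) f a b c d
  + \sum_(a < n) \sum_(b < n) \sum_(c < n) \sum_(d < n) g a b c d
  + \sum_(a < n) \sum_(b < n) \sum_(c < n) \sum_(d < n) h a b c d.
Proof.
rewrite -!big_split; apply: eq_bigr => a _; rewrite -!big_split; apply: eq_bigr => b _.
rewrite -!big_split; apply: eq_bigr => c _; rewrite -!big_split //.
Qed.

Lemma mybeF (K : fieldType) (n : nat) (br : 'rV[K]_n -> 'rV[K]_n -> 'rV[K]_n) r :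
  bilinear_br br -> forall p q s,
  mybe_lhs br r p q s = Fm br r (ebas _ p) (ebas _ q) (ebas _ s).
Proof.
move=> hb p q s.
rewrite /Fm !dot_ebas !rvE !lvE !brsum4 // !sum4E -big4_split3 /mybe_lhs.
apply: eq_bigr => a _; apply: eq_bigr => b _; apply: eq_bigr => c _; apply: eq_bigr => d _.
rewrite /tens3 /= !(brZl hb) !(brZr hb) (@ebasC K n q b) (@ebasC K n s d) (@ebasC K n p a) (@ebasC K n q c) !mxE.
ring.
Qed.

Lemma Rdef (K : fieldType) (n : nat) (r : 'M[K]_n) (B : 'rV[K]_n -> 'rV[K]_n -> K) x :
  rmap r (phiB B x) = rv r (phi B x).
Proof.
rewrite [RHS]row_sum_delta /rmap; apply: eq_bigr => i _.
congr (_ *: _); rewrite /rv !mxE; apply: eq_bigr => j _; rewrite !mxE.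
by rewrite /phiB mulrC.
Qed.

Lemma lv_skew (K : fieldType) (n : nat) (r : 'M[K]_n) x :
  skew_tensor r -> lv r x = - rv r x.
Proof. by move=> h; rewrite /lv /rv h mulmxN opprK. Qed.

Lemma dotphi (K : fieldType) (n : nat) (B : 'rV[K]_n -> 'rV[K]_n -> K) :
  bilinear_form B -> forall x v, dot (phi B x) v = B x v.
Proof.
move=> [hl hr] x v.
rewrite (lin_sum (f := B x) (hr ^~ x) v) /dot mxE.
by apply: eq_bigr => k _; rewrite !mxE mulrC.
Qed.

Lemma phiL (K : fieldType) (n : nat) (B : 'rV[K]_n -> 'rV[K]_n -> K) :
  bilinear_form B -> forall c u v, phi B (c *: u + v) = c *: phi B u + phi B v.
Proof. by move=> [hl hr] c u v; apply/rowP => j; rewrite !mxE hl. Qed.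

Lemma B_R (K : fieldType) (n : nat) (r : 'M[K]_n) (B : 'rV[K]_n -> 'rV[K]_n -> K) :
  skew_tensor r -> bilinear_form B -> (forall x y, B x y = B y x) ->
  forall u v, B u (rv r (phi B v)) = - B (rv r (phi B u)) v.
Proof.
move=> hs hB hsym u v.
rewrite -(dotphi hB) hsym -(dotphi hB).
have -> : dot (phi B u) (rv r (phi B v)) = dot (lv r (phi B u)) (phi B v).
  by rewrite /dot /rv /lv trmx_mul trmxK mulmxA.
by rewrite lv_skew // dotNl dot_sym.
Qed.

Lemma Fphi (K : fieldType) (n : nat) (br : 'rV[K]_n -> 'rV[K]_n -> 'rV[K]_n)
  (r : 'M[K]_n) (B : 'rV[K]_n -> 'rV[K]_n -> K) :
  bilinear_br br -> (forall x y, br x y = - br y x) ->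
  skew_tensor r -> bilinear_form B -> (forall x y, B x y = B y x) ->
  (forall x y z, B (br x y) z = B x (br y z)) ->
  forall x y z,
  Fm br r (phi B x) (phi B y) (phi B z) =
  B (br (rv r (phi B x)) (rv r (phi B y))) z
  - B (rv r (phi B (br (rv r (phi B x)) y + br x (rv r (phi B y))))) z.
Proof.
move=> hb hanti hs hB hsym hinv x y z.
set R := fun w => rv r (phi B w).
have RD : forall u w, R (u + w) = R u + R w.
  move=> u w; rewrite /R; have := phiL hB 1 u w; rewrite !scale1r => ->.
  by rewrite -{1}[phi B u]scale1r rvL scale1r.
have B0 : forall u, B u 0 = 0.
  move=> u; have := (proj2 hB) 1 u 0 0; rewrite !scale1r addr0 mul1r => h.
  by apply: (@addrI _ (B u 0)); rewrite addr0 -h.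
have BN : forall u w, B u (- w) = - B u w.
  move=> u w; have := (proj2 hB) (-1) u w 0.
  by rewrite addr0 scaleN1r mulN1r B0 addr0.
have BDl : forall u w t, B (u + w) t = B u t + B w t.
  by move=> u w t; have := (proj1 hB) 1 u w t; rewrite !scale1r mul1r.
rewrite /Fm !lv_skew // !(brNl hb) !(brNr hb) opprK !(dotphi hB) BN.
rewrite -/(R x) -/(R y) -/(R z) -/(R (br (R x) y + br x (R y))).
rewrite RD BDl.
have h1 : B x (br (R y) (R z)) = - B (R (br x (R y))) z.
  by rewrite -hinv; apply: B_R.
have h2 : B y (br (R x) (R z)) = B (R (br (R x) y)) z.
  have := B_R hs hB hsym (br (R x) y) z; rewrite -/(R z) -/(R (br (R x) y)) => e.
  rewrite -[RHS]opprK -e hinv (hanti y (R z)) BN opprK -(hinv (R x)).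
  exact: hsym.
rewrite h1 h2 (hsym z); ring.
Qed.

Lemma phi_surj (K : fieldType) (n : nat) (B : 'rV[K]_n -> 'rV[K]_n -> K) :
  bilinear_form B -> (forall x, (forall y, B x y = 0) -> x = 0) ->
  forall p : 'I_n, exists x, phi B x = ebas _ p.
Proof.
move=> [hl hr] hnd p.
pose M : 'M[K]_n := \matrix_(i, j) B (ebas _ i) (ebas _ j).
have phiM : forall x, phi B x = x *m M.
  move=> x; apply/rowP => j; rewrite !mxE.
  rewrite (lin_sum (f := fun u => B u (ebas _ j)) (fun c u v => hl c u v _) x).
  by apply: eq_bigr => i _; rewrite !mxE.
have uM : M \in unitmx.
  rewrite -row_free_unit; apply: inj_row_free => v hv.
  apply: hnd => y; rewrite (lin_sum (f := B v) (hr ^~ v) y).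
  apply: big1 => i _.
  have : (phi B v) 0 i = 0 by rewrite phiM hv mxE.
  by rewrite mxE => ->; rewrite mulr0.
exists (ebas _ p *m invmx M).
by rewrite phiM mulmxKV.
Qed.

Theorem corollary2p7 (K : fieldType) (n : nat)
  (charK : [pchar K] =i pred0)
  (br : 'rV[K]_n -> 'rV[K]_n -> 'rV[K]_n) (r : 'M[K]_n)
  (B : 'rV[K]_n -> 'rV[K]_n -> K) :
  malcev br -> skew_tensor r ->
  bilinear_form B ->
  (forall x y, B x y = B y x) ->
  (forall x y z, B (br x y) z = B x (br y z)) ->
  (forall x, (forall y, B x y = 0) -> x = 0) ->
  (malcev_YBE br r <-> rota_baxter0 br (fun x => rmap r (phiB B x))).
Proof.
move=> [hb hanti _] hs hB hsym hinv hnd.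
split.
- move=> hY x y; rewrite !Rdef.
  apply/eqP; rewrite -subr_eq0; apply/eqP; apply: hnd => z.
  have -> : B (br (rv r (phi B x)) (rv r (phi B y))
     - rv r (phi B (br (rv r (phi B x)) y + br x (rv r (phi B y))))) z
     = B (br (rv r (phi B x)) (rv r (phi B y))) z
     - B (rv r (phi B (br (rv r (phi B x)) y + br x (rv r (phi B y))))) z.
    by rewrite -scaleN1r addrC (proj1 hB) mulN1r addrC.
  rewrite -(Fphi hb hanti hs hB hsym hinv); apply: (@F_zero K n br r hb) => p q s.
  by rewrite -(mybeF r hb).
- move=> hRB p q s; rewrite (mybeF r hb).
  have [xp <-] := phi_surj hB hnd p.
  have [xq <-] := phi_surj hB hnd q.
  have [xs <-] := phi_surj hB hnd s.
  rewrite (Fphi hb hanti hs hB hsym hinv).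
  by have := hRB xp xq; rewrite !Rdef => ->; rewrite subrr.
Qed.
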